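(* In the setup described in the context, suppose the Ricci tensor of $(M,g,Q)$ is $$\rho=\frac{3\tau+\tau^*}{8}g+\frac{3\tau^*+\tau}{8}\tilde g .$$ Then the curvature tensor is $$R=\frac{\tau+\tau^*}{4}\pi_1+\frac{3\tau^*+\tau}{8}\pi_2,$$ where $$\pi_1(x,y,z,u)=g(y,z)g(x,u)-g(x,z)g(y,u),$$ $$\pi_2(x,y,z,u)=g(y,z)\tilde g(x,u)+g(x,u)\tilde g(y,z)-g(x,z)\tilde g(y,u)-g(y,u)\tilde g(x,z).$$
   Context: Let $M$ be a 3-dimensional smooth manifold. Fix a coordinate chart $(x^1,x^2,x^3)$ with coordinate vector fields $\partial_i$. Structures: - $g$ is a Riemannian metric with $g(\partial_1,\partial_1)=g(\partial_2,\partial_2)=A$, $g(\partial_3,\partial_3)=B$ and $g(\partial_i,\partial_j)=0$ for $i\ne j$. Here $A,B$ are smooth positive functions. - $Q$ is the $(1,1)$-tensor field with $Q\partial_1=\partial_2$, $Q\partial_2=-\partial_1$, $Q\partial_3=\partial_3$. - $P=Q^2$ and $\tilde g(x,y)=g(x,Py)$. Curvature: - $\nabla$ is the Levi-Civita connection of $g$. - $R(x,y)z=\nabla_x\nabla_yz-\nabla_y\nabla_xz-\nabla_{[x,y]}z$, and $R$ also denotes the $(0,4)$-tensor $R(x,y,z,t)=g(R(x,y)z,t)$. - $\rho(y,z)=g^{ij}R(e_i,y,z,e_j)$, $\tau=g^{ij}\rho_{ij}$ and $\tau^*=\tilde g^{ij}\rho_{ij}$. *)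

(* Defs.v *)
From Stdlib Require Import Reals Lra List.
From Coquelicot Require Import Coquelicot.
Open Scope R_scope.

(** The chart domain: points are coordinate triples (x^1,x^2,x^3), indices 0,1,2. *)
Definition pt : Type := (R * R * R)%type.

Definition shift (i : nat) (p : pt) (t : R) : pt :=
  match p with (x, y, z) =>
    match i with
    | O => (x + t, y, z)
    | S O => (x, y + t, z)
    | _ => (x, y, z + t)
    end
  end.

Definition pd (i : nat) (f : pt -> R) (p : pt) : R :=
  Derive (fun t => f (shift i p t)) 0.

Fixpoint iterpd (l : list nat) (f : pt -> R) : pt -> R :=
  match l with nil => f | i :: l' => pd i (iterpd l' f) end.

Definition smooth_on (U : pt -> Prop) (f : pt -> R) : Prop :=
  forall l : list nat, (forall i, In i l -> (i < 3)%nat) ->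
  forall p, U p ->
    continuous (iterpd l f) p /\
    (forall i, (i < 3)%nat -> ex_derive (fun t => iterpd l f (shift i p t)) 0).

Definition sum3 (f : nat -> R) : R := f 0%nat + f 1%nat + f 2%nat.

Definition cof3 (M : nat -> nat -> R) (i j : nat) : R :=
  M ((i+1) mod 3)%nat ((j+1) mod 3)%nat * M ((i+2) mod 3)%nat ((j+2) mod 3)%nat
  - M ((i+1) mod 3)%nat ((j+2) mod 3)%nat * M ((i+2) mod 3)%nat ((j+1) mod 3)%nat.
Definition det3 (M : nat -> nat -> R) : R := sum3 (fun j => M 0%nat j * cof3 M 0%nat j).
Definition inv3 (M : nat -> nat -> R) (i j : nat) : R := cof3 M j i / det3 M.

Definition gm (A B : pt -> R) (i j : nat) (p : pt) : R :=
  if Nat.eqb i j then (if Nat.eqb i 2 then B p else A p) else 0.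
Definition ginv (A B : pt -> R) (i j : nat) (p : pt) : R :=
  inv3 (fun a b => gm A B a b p) i j.

(** Q as a matrix: Q d_j = sum_i Qm i j d_i. *)
Definition Qm (i j : nat) : R :=
  match i, j with
  | 1%nat, 0%nat => 1
  | 0%nat, 1%nat => -1
  | 2%nat, 2%nat => 1
  | _, _ => 0
  end.
Definition Pm (i j : nat) : R := sum3 (fun k => Qm i k * Qm k j).

Definition gtm (A B : pt -> R) (i j : nat) (p : pt) : R :=
  sum3 (fun k => gm A B i k p * Pm k j).
Definition gtinv (A B : pt -> R) (i j : nat) (p : pt) : R :=
  inv3 (fun a b => gtm A B a b p) i j.

(** Christoffel symbols of the Levi-Civita connection: nabla_{d_i} d_j = Gamma^k_{ij} d_k. *)
Definition Gam (A B : pt -> R) (k i j : nat) (p : pt) : R :=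
  / 2 * sum3 (fun l => ginv A B k l p *
    (pd i (gm A B j l) p + pd j (gm A B i l) p - pd l (gm A B i j) p)).

Definition vfield : Type := pt -> nat -> R.

Definition nabla (A B : pt -> R) (X Y : vfield) : vfield := fun p k =>
  sum3 (fun i => X p i *
    (pd i (fun q => Y q k) p + sum3 (fun j => Gam A B k i j p * Y p j))).

Definition bracket (X Y : vfield) : vfield := fun p k =>
  sum3 (fun i => X p i * pd i (fun q => Y q k) p - Y p i * pd i (fun q => X q k) p).

Definition Rop (A B : pt -> R) (X Y Z : vfield) : vfield := fun p k =>
  nabla A B X (nabla A B Y Z) p k - nabla A B Y (nabla A B X Z) p k
  - nabla A B (bracket X Y) Z p k.

Definition R4 (A B : pt -> R) (X Y Z T : vfield) (p : pt) : R :=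
  sum3 (fun k => sum3 (fun l => gm A B k l p * Rop A B X Y Z p k * T p l)).

Definition cf (i : nat) : vfield := fun _ k => if Nat.eqb k i then 1 else 0.

Definition ric (A B : pt -> R) (a b : nat) (p : pt) : R :=
  sum3 (fun i => sum3 (fun j => ginv A B i j p * R4 A B (cf i) (cf a) (cf b) (cf j) p)).

Definition tau (A B : pt -> R) (p : pt) : R :=
  sum3 (fun i => sum3 (fun j => ginv A B i j p * ric A B i j p)).
Definition taus (A B : pt -> R) (p : pt) : R :=
  sum3 (fun i => sum3 (fun j => gtinv A B i j p * ric A B i j p)).

Definition pi1 (A B : pt -> R) (x y z u : nat) (p : pt) : R :=
  gm A B y z p * gm A B x u p - gm A B x z p * gm A B y u p.
Definition pi2 (A B : pt -> R) (x y z u : nat) (p : pt) : R :=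
  gm A B y z p * gtm A B x u p + gm A B x u p * gtm A B y z p
  - gm A B x z p * gtm A B y u p - gm A B y u p * gtm A B x z p.

(* Main.v *)
Require Import Defs.
From Stdlib Require Import Reals Lra Lia List FunctionalExtensionality.
From Coquelicot Require Import Coquelicot.
Open Scope R_scope.

Lemma ballR (x y e : R) : Rabs (y - x) < e -> ball x e y.
Proof. intros H. unfold ball; simpl. unfold AbsRing_ball, abs, minus, plus, opp; simpl. exact H. Qed.

Lemma ball_pt (x y z a b c e : R) : Rabs (a - x) < e -> Rabs (b - y) < e -> Rabs (c - z) < e ->
  ball ((x, y), z) e ((a, b), c).
Proof. intros. split; [split|]; simpl; apply ballR; auto. Qed.

Ltac pteq := repeat match goal with |- (_,_) = (_,_) => f_equal end; try ring.

Lemma shift_shift_same i q u s : shift i (shift i q u) s = shift i q (u + s).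
Proof. destruct q as [[x y] z]. destruct i as [|[|i]]; simpl; pteq. Qed.

Lemma shift_comm i j q a b : shift i (shift j q b) a = shift j (shift i q a) b.
Proof. destruct q as [[x y] z]. destruct i as [|[|i]]; destruct j as [|[|j]]; simpl; pteq. Qed.

Lemma shift_0 i q : shift i q 0 = q.
Proof. destruct q as [[x y] z]. destruct i as [|[|i]]; simpl; pteq. Qed.

Lemma ball_shift2 p (e : R) i j a b : 0 < e -> Rabs a < e/2 -> Rabs b < e/2 ->
  ball p e (shift i (shift j p b) a).
Proof.
  intros He Ha Hb. destruct p as [[x y] z].
  assert (H0 : Rabs 0 < e) by (rewrite Rabs_R0; auto).
  assert (Hab : Rabs (a + b) < e) by (eapply Rle_lt_trans; [apply Rabs_triang| lra]).
  assert (Ha' : Rabs a < e) by lra. assert (Hb' : Rabs b < e) by lra.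
  destruct i as [|[|i]]; destruct j as [|[|j]]; simpl; apply ball_pt;
  match goal with |- Rabs ?t < _ => 
    first [ replace t with 0 by ring; exact H0 | replace t with a by ring; exact Ha'
          | replace t with b by ring; exact Hb' | replace t with (a+b) by ring; exact Hab ] end.
Qed.

Lemma open_near U p : open U -> U p -> exists e, 0 < e /\
  forall i j a b, Rabs a < e -> Rabs b < e -> U (shift i (shift j p b) a).
Proof.
  intros HU Hp. destruct (HU p Hp) as [e He].
  exists (e/2). split. destruct e; simpl; lra.
  intros. apply He. apply ball_shift2; auto. destruct e; simpl; lra.
Qed.

Lemma open_near1 U p : open U -> U p -> exists e, 0 < e /\
  forall i a, Rabs a < e -> U (shift i p a).
Proof.
  intros HU Hp. destruct (open_near U p HU Hp) as [e [He H]]. exists e. split; auto.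
  intros i a Ha. rewrite <- (shift_0 i p) at 1. rewrite shift_comm. apply H; auto.
  rewrite Rabs_R0; auto.
Qed.

Lemma Derive_transl (g : R -> R) a : Derive g a = Derive (fun s => g (a + s)) 0.
Proof.
  unfold Derive. f_equal. apply Lim_ext. intros h. rewrite Rplus_0_l, Rplus_0_r. reflexivity.
Qed.

Lemma ex_derive_transl (g : R -> R) a : ex_derive (fun s => g (a + s)) 0 -> ex_derive g a.
Proof.
  intros H.
  assert (H2 : ex_derive (fun x => (fun s => g (a + s)) ((fun x => x - a) x)) a).
  { apply (ex_derive_comp (fun s => g (a+s)) (fun x => x - a)). replace (a - a) with 0 by ring. exact H.
    auto_derive; auto. }
  eapply ex_derive_ext; [|exact H2]. intros t. simpl. f_equal. ring.
Qed.

Lemma Derive_shift (h : pt -> R) i q a :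
  Derive (fun t => h (shift i q t)) a = pd i h (shift i q a).
Proof.
  rewrite Derive_transl. unfold pd. apply Derive_ext. intros t. rewrite shift_shift_same. reflexivity.
Qed.

Lemma ex_derive_shift (h : pt -> R) i q a :
  ex_derive (fun t => h (shift i (shift i q a) t)) 0 -> ex_derive (fun t => h (shift i q t)) a.
Proof.
  intros H. apply ex_derive_transl. eapply ex_derive_ext; [|exact H]. intros t.
  simpl. rewrite shift_shift_same. reflexivity.
Qed.
Definition exd i (f : pt -> R) p := ex_derive (fun t => f (shift i p t)) 0.

Lemma smooth_exd U f l i q : smooth_on U f -> (forall k, In k l -> (k < 3)%nat) -> U q -> (i < 3)%nat ->
  exd i (iterpd l f) q.
Proof. intros Hs Hl Hq Hi. destruct (Hs l Hl q Hq) as [_ H]. apply H; auto. Qed.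

Lemma smooth_cont U f l q : smooth_on U f -> (forall k, In k l -> (k < 3)%nat) -> U q ->
  continuous (iterpd l f) q.
Proof. intros Hs Hl Hq. destruct (Hs l Hl q Hq) as [H _]. auto. Qed.

Lemma cont2d (g : pt -> R) p i j : continuous g p ->
  continuity_2d_pt (fun u v => g (shift i (shift j p v) u)) 0 0.
Proof.
  intros Hc eps. apply filterlim_locally with (eps := eps) in Hc.
  destruct Hc as [d Hd].
  assert (Hd2 : 0 < d / 2) by (destruct d; simpl; lra).
  exists (mkposreal _ Hd2). simpl. intros u v Hu Hv.
  rewrite !shift_0. 
  specialize (Hd (shift i (shift j p v) u)).
  assert (B : ball p d (shift i (shift j p v) u)).
  { apply ball_shift2. destruct d; simpl; lra. rewrite Rminus_0_r in Hu; auto. rewrite Rminus_0_r in Hv; auto. }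
  specialize (Hd B). unfold ball in Hd; simpl in Hd. unfold AbsRing_ball, abs, minus, plus, opp in Hd; simpl in Hd.
  exact Hd.
Qed.

Lemma schwarz_pt U f p i j : open U -> smooth_on U f -> U p -> (i < 3)%nat -> (j < 3)%nat ->
  pd i (pd j f) p = pd j (pd i f) p.
Proof.
  intros HU Hs Hp Hi Hj.
  set (F := fun z t => f (shift j (shift i p z) t)).
  assert (E1 : forall z v, Derive (fun t => F z t) v = pd j f (shift i (shift j p v) z)).
  { intros. unfold F. rewrite Derive_shift. rewrite shift_comm. reflexivity. }
  assert (E2 : forall z u, Derive (fun t => F t z) u = pd i f (shift i (shift j p z) u)).
  { intros. unfold F. erewrite Derive_ext. 2:{ intros t. rewrite shift_comm. reflexivity. }
    rewrite Derive_shift. reflexivity. }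
  assert (L : pd i (pd j f) p = Derive (fun z => Derive (fun t => F z t) 0) 0).
  { unfold pd at 1. apply Derive_ext. intros z. rewrite E1, shift_0. reflexivity. }
  assert (R' : pd j (pd i f) p = Derive (fun t => Derive (fun z => F z t) 0) 0).
  { unfold pd at 1. apply Derive_ext. intros z. rewrite E2, shift_0. reflexivity. }
  rewrite L, R'. apply Schwarz.
  - destruct (open_near U p HU Hp) as [e [He Hn]].
    exists (mkposreal e He). simpl. intros u v Hu Hv. rewrite Rminus_0_r in Hu, Hv.
    assert (Hl0 : forall k, In k nil -> (k < 3)%nat) by (intros k []).
    assert (Hlj : forall k, In k (j :: nil) -> (k < 3)%nat) by (intros k [<-|[]]; auto).
    assert (Hli : forall k, In k (i :: nil) -> (k < 3)%nat) by (intros k [<-|[]]; auto).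
    repeat split.
    + unfold F. eapply ex_derive_ext. { intros t. rewrite shift_comm. reflexivity. }
      apply ex_derive_shift. apply (smooth_exd U f nil); auto.
    + unfold F. apply ex_derive_shift. rewrite shift_comm. apply (smooth_exd U f nil); auto.
    + apply (ex_derive_ext (fun z => pd j f (shift i (shift j p v) z))). { intros t. rewrite E1. reflexivity. }
      apply ex_derive_shift. apply (smooth_exd U f (j::nil)); auto.
    + apply (ex_derive_ext (fun z => pd i f (shift j (shift i p u) z))). { intros t. rewrite E2. rewrite shift_comm. reflexivity. }
      apply ex_derive_shift. rewrite shift_comm. apply (smooth_exd U f (i::nil)); auto.
  - eapply continuity_2d_pt_ext.
    { intros u v. symmetry. erewrite Derive_ext. 2:{ intros z. rewrite E1. reflexivity. }
      rewrite Derive_shift. reflexivity. }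
    apply (cont2d (pd i (pd j f)) p i j).
    apply (smooth_cont U f (i :: j :: nil)); auto. intros k [<-|[<-|[]]]; auto.
  - eapply continuity_2d_pt_ext.
    { intros u v. symmetry. erewrite Derive_ext. 2:{ intros z. rewrite E2. rewrite shift_comm. reflexivity. }
      rewrite Derive_shift. rewrite shift_comm. reflexivity. }
    apply (cont2d (pd j (pd i f)) p i j).
    apply (smooth_cont U f (j :: i :: nil)); auto. intros k [<-|[<-|[]]]; auto.
Qed.
Lemma pd_ext i f h p : (forall q, f q = h q) -> pd i f p = pd i h p.
Proof. intros H. unfold pd. apply Derive_ext. intros; apply H. Qed.

Lemma pd_ext_loc U i f h p : open U -> U p -> (forall q, U q -> f q = h q) -> pd i f p = pd i h p.
Proof.
  intros HU Hp H. unfold pd. apply Derive_ext_loc.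
  destruct (open_near1 U p HU Hp) as [e [He Hn]]. exists (mkposreal e He).
  intros t Ht. apply H. apply Hn. unfold ball in Ht; simpl in Ht.
  unfold AbsRing_ball, abs, minus, plus, opp in Ht; simpl in Ht. replace t with (t - 0) by ring. exact Ht.
Qed.

Lemma pd_const i c p : pd i (fun _ => c) p = 0.
Proof. unfold pd. apply Derive_const. Qed.

Lemma pd_plus i f h p : exd i f p -> exd i h p -> pd i (fun q => f q + h q) p = pd i f p + pd i h p.
Proof. intros. unfold pd. apply (Derive_plus (fun t => f (shift i p t)) (fun t => h (shift i p t))); auto. Qed.
Lemma pd_minus i f h p : exd i f p -> exd i h p -> pd i (fun q => f q - h q) p = pd i f p - pd i h p.
Proof. intros. unfold pd. apply (Derive_minus (fun t => f (shift i p t)) (fun t => h (shift i p t))); auto. Qed.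
Lemma pd_mult i f h p : exd i f p -> exd i h p -> pd i (fun q => f q * h q) p = pd i f p * h p + f p * pd i h p.
Proof. intros. unfold pd. rewrite (Derive_mult (fun t => f (shift i p t)) (fun t => h (shift i p t))); auto.
  rewrite shift_0. reflexivity. Qed.
Lemma pd_scal i c f p : pd i (fun q => c * f q) p = c * pd i f p.
Proof. unfold pd. apply (Derive_scal (fun t => f (shift i p t))). Qed.
Lemma pd_inv i f p : exd i f p -> f p <> 0 -> pd i (fun q => / f q) p = - pd i f p / (f p)^2.
Proof. intros H1 H2. unfold pd. rewrite (Derive_inv (fun t => f (shift i p t))); auto; rewrite shift_0; auto. Qed.

Lemma exd_plus i f h p : exd i f p -> exd i h p -> exd i (fun q => f q + h q) p.
Proof. intros. unfold exd. apply (ex_derive_plus (fun t => f (shift i p t)) (fun t => h (shift i p t))); auto. Qed.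
Lemma exd_minus i f h p : exd i f p -> exd i h p -> exd i (fun q => f q - h q) p.
Proof. intros. unfold exd. apply (ex_derive_minus (fun t => f (shift i p t)) (fun t => h (shift i p t))); auto. Qed.
Lemma exd_inv i f p : exd i f p -> f p <> 0 -> exd i (fun q => / f q) p.
Proof. intros. unfold exd. apply (ex_derive_inv (fun t => f (shift i p t))); auto. rewrite shift_0; auto. Qed.

Lemma iterpd_const l c : (l <> nil) -> iterpd l (fun _ : pt => c) = fun _ => 0.
Proof.
  destruct l as [|i l]. intros H; congruence. intros _. revert i. induction l as [|j l IH]; intros i.
  - simpl. apply functional_extensionality. intros q. apply pd_const.
  - change (pd i (iterpd (j::l) (fun _ => c)) = fun _ => 0). rewrite (IH j). apply functional_extensionality. intros q. apply pd_const.
Qed.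

Lemma smooth_const U c : smooth_on U (fun _ => c).
Proof.
  intros l Hl q Hq. destruct l as [|i l].
  - simpl. split. apply continuous_const. intros. unfold exd. apply ex_derive_const.
  - rewrite iterpd_const by congruence. split. apply continuous_const. intros. apply ex_derive_const.
Qed.

Lemma gm_fun A B j l : gm A B j l = if Nat.eqb j l then (if Nat.eqb j 2 then B else A) else (fun _ => 0).
Proof. apply functional_extensionality. intros q. unfold gm. destruct (Nat.eqb j l), (Nat.eqb j 2); auto. Qed.

Lemma smooth_gm U A B j l : smooth_on U A -> smooth_on U B -> smooth_on U (gm A B j l).
Proof. intros HA HB. rewrite gm_fun. destruct (Nat.eqb j l), (Nat.eqb j 2); auto using smooth_const. Qed.

Lemma ginv_diag A B k l q : A q <> 0 -> B q <> 0 -> (k < 3)%nat -> (l < 3)%nat ->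
  ginv A B k l q = if Nat.eqb k l then / gm A B k k q else 0.
Proof.
  intros HA HB Hk Hl. unfold ginv, inv3, det3, sum3, cof3, gm.
  destruct k as [|[|[|k]]]; try lia; destruct l as [|[|[|l]]]; try lia; simpl; try field; auto.
Qed.

Definition Sg A B k i j q := pd i (gm A B j k) q + pd j (gm A B i k) q - pd k (gm A B i j) q.

Lemma Gam_eq A B k i j q : A q <> 0 -> B q <> 0 -> (k < 3)%nat ->
  Gam A B k i j q = / 2 * (/ gm A B k k q * Sg A B k i j q).
Proof.
  intros HA HB Hk. unfold Gam, sum3, Sg.
  rewrite !(ginv_diag A B k) by (auto; lia).
  destruct k as [|[|[|k]]]; try lia; simpl; ring.
Qed.
Section Geo.
Variables (U : pt -> Prop) (A B : pt -> R).
Hypotheses (HU : open U) (HsA : smooth_on U A) (HsB : smooth_on U B)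
  (HA : forall p, U p -> 0 < A p) (HB : forall p, U p -> 0 < B p).

Lemma gm_nz k q : U q -> (k < 3)%nat -> gm A B k k q <> 0.
Proof. intros Hq Hk. unfold gm. rewrite Nat.eqb_refl. destruct (Nat.eqb k 2).
  specialize (HB q Hq); lra. specialize (HA q Hq); lra. Qed.

Lemma exd_gm l i j k q : U q -> (i < 3)%nat -> (forall m, In m l -> (m < 3)%nat) -> exd i (iterpd l (gm A B j k)) q.
Proof. intros. apply (smooth_exd U); auto. apply smooth_gm; auto. Qed.

Lemma dGam x k i j p : U p -> (x < 3)%nat -> (k < 3)%nat -> (i < 3)%nat -> (j < 3)%nat ->
  pd x (Gam A B k i j) p =
  / 2 * ((- pd x (gm A B k k) p / (gm A B k k p)^2) * Sg A B k i j p
         + / gm A B k k p * (pd x (pd i (gm A B j k)) p + pd x (pd j (gm A B i k)) p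
                              - pd x (pd k (gm A B i j)) p)).
Proof.
  intros Hp Hx Hk Hi Hj.
  assert (Hnz : forall q, U q -> A q <> 0 /\ B q <> 0).
  { intros q Hq. specialize (HA q Hq); specialize (HB q Hq). split; lra. }
  rewrite (pd_ext_loc U x _ (fun q => / 2 * ((fun q => / gm A B k k q) q * Sg A B k i j q)) p HU Hp).
  2:{ intros q Hq. destruct (Hnz q Hq). apply Gam_eq; auto. }
  rewrite pd_scal.
  assert (E1 : exd x (gm A B k k) p) by (apply (exd_gm nil); auto; intros m []).
  assert (Ei : forall a b c, (a < 3)%nat -> exd x (pd a (gm A B b c)) p).
  { intros a b c Ha. apply (exd_gm (a :: nil)); auto. intros m [<-|[]]; auto. }
  rewrite pd_mult.
  2:{ apply exd_inv; auto. apply gm_nz; auto. }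
  2:{ unfold Sg. apply exd_minus. apply exd_plus; auto. auto. }
  rewrite pd_inv; auto. 2: apply gm_nz; auto.
  unfold Sg at 2. rewrite pd_minus; auto. 2: apply exd_plus; auto.
  rewrite pd_plus; auto.
Qed.

Lemma nabla_cf i Y q k : (i < 3)%nat ->
  nabla A B (cf i) Y q k = pd i (fun q => Y q k) q + sum3 (fun j => Gam A B k i j q * Y q j).
Proof. intros Hi. unfold nabla, sum3, cf. destruct i as [|[|[|i]]]; try lia; simpl; ring. Qed.

Lemma pd_cf i j k q : pd i (fun q => cf j q k) q = 0.
Proof. unfold cf. apply pd_const. Qed.

Lemma nabla_cf_cf i j q k : (i < 3)%nat -> (j < 3)%nat -> nabla A B (cf i) (cf j) q k = Gam A B k i j q.
Proof. intros Hi Hj. rewrite nabla_cf by auto. rewrite pd_cf. unfold sum3, cf.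
  destruct j as [|[|[|j]]]; try lia; simpl; ring. Qed.

Lemma bracket_cf i j q k : bracket (cf i) (cf j) q k = 0.
Proof. unfold bracket, sum3. rewrite !pd_cf. ring. Qed.

Lemma Rop_cf x y z p k : (x < 3)%nat -> (y < 3)%nat -> (z < 3)%nat ->
  Rop A B (cf x) (cf y) (cf z) p k =
  pd x (Gam A B k y z) p - pd y (Gam A B k x z) p
  + sum3 (fun j => Gam A B k x j p * Gam A B j y z p - Gam A B k y j p * Gam A B j x z p).
Proof.
  intros Hx Hy Hz. unfold Rop. rewrite !nabla_cf by auto.
  rewrite (pd_ext x _ (Gam A B k y z)) by (intros; apply nabla_cf_cf; auto).
  rewrite (pd_ext y _ (Gam A B k x z)) by (intros; apply nabla_cf_cf; auto).
  unfold nabla at 3. unfold sum3. rewrite !bracket_cf. rewrite !nabla_cf_cf by lia. ring.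
Qed.

Lemma R4_cf x y z u p : (x < 3)%nat -> (y < 3)%nat -> (z < 3)%nat -> (u < 3)%nat ->
  R4 A B (cf x) (cf y) (cf z) (cf u) p = gm A B u u p * Rop A B (cf x) (cf y) (cf z) p u.
Proof. intros. unfold R4, sum3, cf. destruct u as [|[|[|u]]]; try lia; unfold gm; simpl; ring. Qed.

End Geo.
Section Alg.
Variables (U : pt -> Prop) (A B : pt -> R).
Hypotheses (HU : open U) (HsA : smooth_on U A) (HsB : smooth_on U B)
  (HA : forall p, U p -> 0 < A p) (HB : forall p, U p -> 0 < B p).

Lemma ric_diag a b p : U p ->
  ric A B a b p = sum3 (fun i => / gm A B i i p * R4 A B (cf i) (cf a) (cf b) (cf i) p).
Proof.
  intros Hp. assert (A p <> 0) by (specialize (HA p Hp); lra). assert (B p <> 0) by (specialize (HB p Hp); lra).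
  unfold ric, sum3. rewrite !(ginv_diag A B) by (auto; lia). simpl. ring.
Qed.

Lemma tau_diag p : U p -> tau A B p = sum3 (fun i => / gm A B i i p * ric A B i i p).
Proof.
  intros Hp. assert (A p <> 0) by (specialize (HA p Hp); lra). assert (B p <> 0) by (specialize (HB p Hp); lra).
  unfold tau, sum3. rewrite !(ginv_diag A B) by (auto; lia). simpl. ring.
Qed.

Definition GS k i j p := / 2 * (/ gm A B k k p * Sg A B k i j p).
Definition dGS x k i j p := / 2 * ((- pd x (gm A B k k) p / (gm A B k k p)^2) * Sg A B k i j p
         + / gm A B k k p * (pd x (pd i (gm A B j k)) p + pd x (pd j (gm A B i k)) p
                              - pd x (pd k (gm A B i j)) p)).
Definition Rs x y z u p := gm A B u u p * (dGS x u y z p - dGS y u x z p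
  + sum3 (fun j => GS u x j p * GS j y z p - GS u y j p * GS j x z p)).

Lemma R4_Rs x y z u p : U p -> (x < 3)%nat -> (y < 3)%nat -> (z < 3)%nat -> (u < 3)%nat ->
  R4 A B (cf x) (cf y) (cf z) (cf u) p = Rs x y z u p.
Proof.
  intros Hp Hx Hy Hz Hu. assert (A p <> 0) by (specialize (HA p Hp); lra). assert (B p <> 0) by (specialize (HB p Hp); lra).
  rewrite R4_cf, Rop_cf by auto. rewrite !(dGam U A B HU HsA HsB HA HB) by auto.
  unfold Rs, sum3, dGS, GS. rewrite !(Gam_eq A B) by (auto; lia). reflexivity.
Qed.

End Alg.

Lemma pd_const_fun i c : pd i (fun _ : pt => c) = fun _ => 0.
Proof. apply functional_extensionality. intros; apply pd_const. Qed.

Section Sym.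
Variables (U : pt -> Prop) (A B : pt -> R).
Hypotheses (HU : open U) (HsA : smooth_on U A) (HsB : smooth_on U B)
  (HA : forall p, U p -> 0 < A p) (HB : forall p, U p -> 0 < B p).

Ltac brute p Hp :=
  assert (Ha : A p <> 0) by (specialize (HA p Hp); lra); assert (Hb : B p <> 0) by (specialize (HB p Hp); lra);
  rewrite !(R4_Rs U A B HU HsA HsB HA HB) by (auto; lia);
  unfold Rs, dGS, GS, Sg, sum3; rewrite !gm_fun;
  assert (sA01 := schwarz_pt U A p 1 0 HU HsA Hp ltac:(lia) ltac:(lia));
  assert (sA02 := schwarz_pt U A p 2 0 HU HsA Hp ltac:(lia) ltac:(lia));
  assert (sA12 := schwarz_pt U A p 2 1 HU HsA Hp ltac:(lia) ltac:(lia));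
  assert (sB01 := schwarz_pt U B p 1 0 HU HsB Hp ltac:(lia) ltac:(lia));
  assert (sB02 := schwarz_pt U B p 2 0 HU HsB Hp ltac:(lia) ltac:(lia));
  assert (sB12 := schwarz_pt U B p 2 1 HU HsB Hp ltac:(lia) ltac:(lia)).

Ltac fin := simpl; rewrite ?pd_const_fun, ?pd_const;
  repeat match goal with H : pd ?i (pd ?j ?f) ?q = _ |- context [pd ?i (pd ?j ?f) ?q] => rewrite H end;
  field; repeat split; assumption.

Lemma S2 p x y z u : U p -> (x < 3)%nat -> (y < 3)%nat -> (z < 3)%nat -> (u < 3)%nat ->
  R4 A B (cf x) (cf y) (cf z) (cf u) p = - R4 A B (cf x) (cf y) (cf u) (cf z) p.
Proof.
  intros Hp Hx Hy Hz Hu. brute p Hp.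
  destruct x as [|[|[|x]]]; try lia; destruct y as [|[|[|y]]]; try lia;
  destruct z as [|[|[|z]]]; try lia; destruct u as [|[|[|u]]]; try lia; fin.
Qed.

Lemma S3 p x y z u : U p -> (x < 3)%nat -> (y < 3)%nat -> (z < 3)%nat -> (u < 3)%nat ->
  R4 A B (cf x) (cf y) (cf z) (cf u) p = R4 A B (cf z) (cf u) (cf x) (cf y) p.
Proof.
  intros Hp Hx Hy Hz Hu. brute p Hp.
  destruct x as [|[|[|x]]]; try lia; destruct y as [|[|[|y]]]; try lia;
  destruct z as [|[|[|z]]]; try lia; destruct u as [|[|[|u]]]; try lia; fin.
Qed.
End Sym.

Lemma S1 A B p x y z u : (x < 3)%nat -> (y < 3)%nat -> (z < 3)%nat -> (u < 3)%nat ->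
  R4 A B (cf x) (cf y) (cf z) (cf u) p = - R4 A B (cf y) (cf x) (cf z) (cf u) p.
Proof.
  intros. rewrite !R4_cf, !Rop_cf by auto. unfold sum3. ring.
Qed.

Lemma key U A B (HU : open U) (HsA : smooth_on U A) (HsB : smooth_on U B)
  (HA : forall p, U p -> 0 < A p) (HB : forall p, U p -> 0 < B p) p x y z u :
  U p -> (x < 3)%nat -> (y < 3)%nat -> (z < 3)%nat -> (u < 3)%nat ->
  R4 A B (cf x) (cf y) (cf z) (cf u) p =
    ric A B y z p * gm A B x u p + ric A B x u p * gm A B y z p
  - ric A B x z p * gm A B y u p - ric A B y u p * gm A B x z p
  - tau A B p / 2 * (gm A B y z p * gm A B x u p - gm A B x z p * gm A B y u p).
Proof.
  intros Hp Hx Hy Hz Hu.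
  assert (Ha : A p <> 0) by (specialize (HA p Hp); lra). assert (Hb : B p <> 0) by (specialize (HB p Hp); lra).
  rewrite (tau_diag U A B HA HB) by auto. unfold sum3.
  rewrite !(ric_diag U A B HA HB) by auto. unfold sum3.
  assert (Z1 : forall i k l, (i < 3)%nat -> (k < 3)%nat -> (l < 3)%nat -> R4 A B (cf i) (cf i) (cf k) (cf l) p = 0).
  { intros i k l H1 H2 H3. pose proof (S1 A B p i i k l H1 H1 H2 H3). lra. }
  assert (Z2 : forall i j k, (i < 3)%nat -> (j < 3)%nat -> (k < 3)%nat -> R4 A B (cf i) (cf j) (cf k) (cf k) p = 0).
  { intros i j k H1 H2 H3. pose proof (S2 U A B HU HsA HsB HA HB p i j k k Hp H1 H2 H3 H3). lra. }
  destruct x as [|[|[|x]]]; try lia; destruct y as [|[|[|y]]]; try lia;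
  destruct z as [|[|[|z]]]; try lia; destruct u as [|[|[|u]]]; try lia;
  unfold gm; cbn [Nat.eqb];
  repeat match goal with |- context [R4 A B (cf ?i) (cf ?j) (cf ?k) (cf ?l) p] =>
    first [
      let b := eval compute in (Nat.eqb i j) in lazymatch b with true => rewrite (Z1 i k l) by lia end
    | let b := eval compute in (Nat.eqb k l) in lazymatch b with true => rewrite (Z2 i j k) by lia end
    | let b := eval compute in (Nat.ltb j i) in lazymatch b with true => rewrite (S1 A B p i j k l) by lia end
    | let b := eval compute in (Nat.ltb l k) in lazymatch b with true =>
         rewrite (S2 U A B HU HsA HsB HA HB p i j k l) by (auto; lia) end
    | let b := eval compute in (orb (Nat.ltb k i) (andb (Nat.eqb k i) (Nat.ltb l j))) in
         lazymatch b with true => rewrite (S3 U A B HU HsA HsB HA HB p i j k l) by (auto; lia) end ]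
  end;
  field; repeat split; assumption.
Qed.

Theorem theorem5p9 (U : pt -> Prop) (A B : pt -> R) :
  open U ->
  smooth_on U A -> smooth_on U B ->
  (forall p, U p -> 0 < A p) -> (forall p, U p -> 0 < B p) ->
  (forall p, U p -> forall a b : nat, (a < 3)%nat -> (b < 3)%nat ->
     ric A B a b p =
       (3 * tau A B p + taus A B p) / 8 * gm A B a b p
       + (3 * taus A B p + tau A B p) / 8 * gtm A B a b p) ->
  forall p, U p -> forall x y z u : nat,
    (x < 3)%nat -> (y < 3)%nat -> (z < 3)%nat -> (u < 3)%nat ->
    R4 A B (cf x) (cf y) (cf z) (cf u) p =
      (tau A B p + taus A B p) / 4 * pi1 A B x y z u p
      + (3 * taus A B p + tau A B p) / 8 * pi2 A B x y z u p.
Proof.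
  intros HU HsA HsB HA HB Hric p Hp x y z u Hx Hy Hz Hu.
  rewrite (key U A B HU HsA HsB HA HB p x y z u Hp Hx Hy Hz Hu).
  rewrite (Hric p Hp y z Hy Hz), (Hric p Hp x u Hx Hu), (Hric p Hp x z Hx Hz), (Hric p Hp y u Hy Hu).
  unfold pi1, pi2. field.
Qed.
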